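(* (i) Let $n>1$ be an odd integer. Then there is no positive integer $m$ with $(f(m),d(m))=(n,2n)$, and there is no positive integer $m$ with $(f(m),d(m))=(n,4n)$. (ii) Let $L$ be a Linnik constant. There is a constant $C>0$ (depending only on $L$) such that for all odd primes $p,q$ with $p<q$, $p\mid q-1$ and $p^2\nmid q-1$, there exists a positive integer $m\le C\,p\,(pq)^{L+1}$ with $f(m)=q$ and $d(m)=pq$.
   Context: For a positive integer $m$, let $\varphi(m)$ be Euler's function and $\lambda(m)$ the Carmichael function (the exponent of the multiplicative group $(\mathbb{Z}/m\mathbb{Z})^*$). Let $\mathrm{rad}(m)$ be the product of the distinct primes dividing $m$. Let $\delta=2$ if $4\mid m$ and $\delta=1$ otherwise. Define $$ d(m)=\gcd\big(m,\ \delta\,\varphi(\mathrm{rad}(m))\big),\qquad f(m)=\gcd\big(m,\ \delta\,\lambda(m)\varphi(\mathrm{rad}(m))/\varphi(m)\big). $$ A Linnik constant is a positive number $L$ such that there is an absolute constant $c>0$ with the property that for all integers $1\le a<q$ with $\gcd(a,q)=1$, the smallest prime $p(a,q)$ in the progression $\{a+jq: j\ge 0\}$ satisfies $p(a,q)\le c\, q^L$ (such $L$ exist by Linnik's theorem; e.g. $L=5$ works). *)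

(* Defs.v *)
From mathcomp Require Import all_boot all_algebra all_fingroup all_solvable.
From Stdlib Require Import Reals.

Set Implicit Arguments. Unset Strict Implicit. Unset Printing Implicit Defensive.

(* Carmichael function: exponent of the unit group of Z/mZ.
   ('Z_m is Z/mZ for m >= 2; for m = 1 it is Z/2Z whose unit group is
   trivial, giving lambda 1 = 1, which is correct.) *)
Definition carmichael (m : nat) : nat := exponent (units_Zp m).

Definition rad (m : nat) : nat := \prod_(p <- primes m) p.

Definition delta (m : nat) : nat := if 4 %| m then 2 else 1.

Definition d_fun (m : nat) : nat := gcdn m (delta m * totient (rad m)).

(* delta*lambda(m)*phi(rad m)/phi(m) is always an integer; exact nat division. *)
Definition f_fun (m : nat) : nat :=
  gcdn m ((delta m * carmichael m * totient (rad m)) %/ totient m).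

Definition linnik_constant (L : R) : Prop :=
  (0 < L)%R /\
  exists c : R, (0 < c)%R /\
    forall a q : nat, 1 <= a -> a < q -> coprime a q ->
      exists j : nat, prime (a + j * q) /\
        (INR (a + j * q) <= c * Rpower (INR q) L)%R.

(* Main.v *)
Require Import Defs.
From mathcomp Require Import all_boot all_algebra all_fingroup all_solvable.
From Stdlib Require Import Reals.
From Stdlib Require Import Lra.
From mathcomp Require Import zify ring.
Set Implicit Arguments. Unset Strict Implicit. Unset Printing Implicit Defensive.
Local Notation "x ^ y" := (expn x y) : nat_scope.
Import GRing.Theory FinRing.Theory.
Section G.
Local Open Scope ring_scope.
Lemma carm_pow m x : (1 < m)%nat -> coprime x m -> (x ^ carmichael m = 1 %[mod m])%nat.
Proof.
move=> m1 cx.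
have ux : ((x%:R : 'Z_m)%R \is a GRing.unit) by rewrite unitZpE // coprime_sym.
pose u : {unit 'Z_m} := Sub (x%:R : 'Z_m) ux.
have H : (x%:R : 'Z_m) ^+ carmichael m = 1.
  by have := expg_exponent (in_setT u); move/(congr1 val); rewrite val_unitX.
move: H; rewrite -natrX => /(congr1 (@nat_of_ord _)); rewrite val_Zp_nat // => ->.
by rewrite -(val_Zp_nat m1 1).
Qed.

End G.
Section G2.
Local Open Scope ring_scope.
Lemma carm_dvd m T : (1 < m)%nat -> (forall x, coprime x m -> (x ^ T = 1 %[mod m])%nat) ->
  (carmichael m %| T)%nat.
Proof.
move=> m1 H; apply/exponentP => u _.
apply: val_inj; rewrite val_unitX /=.
have e : (val u : 'Z_m) = (val (val u) : nat)%:R by rewrite natr_Zp.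
have cu : coprime (val (val u)) m.
  by have := valP u; rewrite {1}e unitZpE // coprime_sym.
change (val u ^+ T = 1); rewrite e -natrX.
by rewrite -Zp_nat_mod // H // Zp_nat_mod.
Qed.

End G2.
Lemma carm_prime m l : 0 < m -> prime l -> l %| totient m -> l %| carmichael m.
Proof.
move=> m0 pl dl.
have : l \in primes (carmichael m).
  rewrite /carmichael primes_exponent card_units_Zp // mem_primes pl dl totient_gt0 m0 //.
by rewrite mem_primes => /and3P[].
Qed.

Lemma binom_step p j t : prime p -> 2 < p -> 0 < j ->
  exists w, (1 + p ^ j * t) ^ p = 1 + p ^ j.+1 * t * (1 + p * w).
Proof.
move=> pp p2 j0.
set A := p ^ j * t.
have hS : p ^ j.+2 * t %| \sum_(2 <= i < p.+1) 'C(p, i) * A ^ i.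
  rewrite big_nat_cond; apply: dvdn_sum => i /andP[/andP[i2 ip] _].
  have hA : A ^ i = p ^ (j * i) * t ^ i by rewrite expnMn expnM.
  rewrite hA.
  case: (ltngtP i p) => [ilt|//|->].
  - rewrite expnS -mulnA; apply: dvdn_mul.
      by apply: prime_dvd_bin => //; lia.
    apply: dvdn_mul; first by rewrite dvdn_exp2l //; nia.
    by rewrite -(subnKC (ltnW i2)) expnD dvdn_mulr // expnS dvdn_mulr.
  - by lia.
  - rewrite binn mul1n; apply: dvdn_mul; first by rewrite dvdn_exp2l //; nia.
    by rewrite -(prednK (prime_gt0 pp)) expnS dvdn_mulr.
exists ((\sum_(2 <= i < p.+1) 'C(p, i) * A ^ i) %/ (p ^ j.+2 * t)).
set S := \sum_(2 <= i < p.+1) 'C(p, i) * A ^ i.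
rewrite expnDn -(big_mkord xpredT (fun i => 'C(p, i) * (1 ^ (p - i) * A ^ i))) big_ltn // big_ltn; last by lia.
rewrite bin0 bin1 !exp1n expn0 expn1 !mul1n.
have -> : \sum_(2 <= i < p.+1) 'C(p, i) * (1 ^ (p - i) * A ^ i) = S.
  by apply: eq_bigr => i _; rewrite exp1n mul1n.
have hS' := divnK hS; rewrite -/S in hS'.
set w := S %/ _ in hS' *.
rewrite -[in p * A + S]hS' /A !expnS.
set P := p ^ j; nia.
Qed.

Lemma lte_iter p t i : prime p -> 2 < p ->
  exists w, (1 + p * t) ^ (p ^ i) = 1 + p ^ i.+1 * t * (1 + p * w).
Proof.
move=> pp p2; elim: i => [|i [w IH]].
  by exists 0; rewrite expn0 expn1 !muln0 addn0 muln1.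
have [w' Hw'] := binom_step (t * (1 + p * w)) pp p2 (ltn0Sn i).
exists (w + w' + p * w * w').
rewrite [p ^ i.+1]expnS [p * p ^ i]mulnC expnM IH -(mulnA _ t) Hw'.
set P := p ^ i.+2; nia.
Qed.

Lemma pow_gcd_mod x a b N : 0 < a -> x ^ a = 1 %[mod N] -> x ^ b = 1 %[mod N] ->
  x ^ (gcdn a b) = 1 %[mod N].
Proof.
move=> a0 Ha Hb; case: (egcdnP b a0) => km kn def _.
have e1 : x ^ (kn * b) = 1 %[mod N] by rewrite mulnC expnM -modnXm Hb modnXm exp1n.
have e2 : x ^ (km * a) = 1 %[mod N] by rewrite mulnC expnM -modnXm Ha modnXm exp1n.
by rewrite -[x ^ gcdn a b]mul1n -modnMml -{1}e1 modnMml -expnD -def.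
Qed.

Lemma pow_pow_mod x y c N : x ^ y = 1 %[mod N] -> x ^ (y * c) = 1 %[mod N].
Proof. by move=> H; rewrite expnM -modnXm H modnXm exp1n. Qed.

Lemma carm_gt0 m : 0 < carmichael m.
Proof. exact: exponent_gt0. Qed.

Lemma carm_ppow m p : 0 < m -> prime p -> 2 < p ->
  p ^ (logn p m).-1 %| carmichael m.
Proof.
move=> m0 pp p2.
set e := logn p m.
case: (leqP e 1) => e1.
  by have -> : e.-1 = 0 by lia.
have [r cpr mE] := pfactor_coprime pp m0; rewrite -/e in mE.
have r0 : 0 < r by move: m0; rewrite mE muln_gt0 => /andP[].
have pe : p ^ e = p ^ (e.-1) * p by rewrite -expnSr; congr (_ ^ _); lia.
have m1 : 1 < m.
  rewrite mE; have : 1 < p ^ e by rewrite -(expn0 p) ltn_exp2l ?prime_gt1 //; lia.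
  by have := leq_pmull (p ^ e) r0; lia.
set x := 1 + p * r.
have cx : coprime x m.
  rewrite mE coprimeMr; apply/andP; split; rewrite /x.
    by rewrite /coprime gcdnC addnC gcdnMDl gcdn1.
  apply: coprimeXr.
  by rewrite /coprime gcdnC addnC mulnC gcdnMDl gcdn1.
have H1 := carm_pow m1 cx.
have [w Hw] := lte_iter r (e.-1) pp p2.
have H2 : x ^ (p ^ e.-1) = 1 %[mod m].
  rewrite Hw mE (_ : e.-1.+1 = e); last by lia.
  by rewrite (mulnC (p ^ e) r) [_ * (1 + _)]mulnC addnC modnMDl.
have H3 := pow_gcd_mod (carm_gt0 m) H1 H2.
have /(dvdn_pfactor _ _ pp) [k kle gE] := dvdn_gcdr (carmichael m) (p ^ e.-1).
case: (ltnP k e.-1) => klt.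
  have [w' Hw'] := lte_iter r (e.-2) pp p2.
  have hx : x ^ (p ^ e.-2) = 1 %[mod m].
    have -> : p ^ e.-2 = p ^ k * p ^ (e.-2 - k).
      by rewrite -expnD subnKC //; clear -klt e1; lia.
    apply: (@pow_pow_mod x (p ^ k) (p ^ (e.-2 - k)) m); rewrite -gE; exact: H3.
  move: hx; rewrite /x Hw' (_ : e.-2.+1 = e.-1); last by clear -e1; lia.
  set X := p ^ e.-1 * r * (1 + p * w').
  move=> /eqP; rewrite -{2}[1]addn0 eqn_modDl mod0n => /eqP hX.
  have : (p ^ e.-1 * r) * p %| (p ^ e.-1 * r) * (1 + p * w').
    have mE' : p ^ e.-1 * r * p = m by rewrite mE pe mulnCA mulnA.
    by rewrite mE' /dvdn hX.
  rewrite dvdn_pmul2l; last by rewrite muln_gt0 expn_gt0 prime_gt0.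
  rewrite dvdn_addl; last by rewrite dvdn_mulr.
  by rewrite dvdn1 => /eqP p1; move: p2; rewrite p1.
have -> : p ^ e.-1 = gcdn (carmichael m) (p ^ e.-1) by rewrite gE; congr (_ ^ _); clear -kle klt; lia.
exact: dvdn_gcdl.
Qed.

Lemma totient_prod_primes s : uniq s -> all prime s ->
  totient (\prod_(x <- s) x) = \prod_(x <- s) x.-1.
Proof.
elim: s => [|x s IH] /=; first by rewrite !big_nil.
move=> /andP[xs us] /andP[px ps].
rewrite !big_cons totient_coprime ?(totient_prime px) ?IH //.
rewrite prime_coprime // Euclid_dvd_prod // big_has; apply/hasPn => y ys.
rewrite dvdn_prime2 //; last exact: (allP ps).
by apply/eqP => exy; move: xs; rewrite exy ys.
Qed.

Lemma all_prime_primes m : all prime (primes m).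
Proof. by apply/allP => p; rewrite mem_primes => /andP[]. Qed.

Lemma totient_rad m : totient (Defs.rad m) = \prod_(p <- primes m) p.-1.
Proof. by rewrite /Defs.rad totient_prod_primes ?primes_uniq ?all_prime_primes. Qed.

Lemma rad_totient m : 0 < m -> totient m * Defs.rad m = m * totient (Defs.rad m).
Proof.
move=> m0; rewrite totientE // totient_rad /Defs.rad.
have mE : m = \prod_(p <- primes m) p ^ logn p m.
  by rewrite {1}(prod_prime_decomp m0) prime_decompE big_map.
rewrite -big_split /=.
have -> : m * \prod_(p <- primes m) p.-1 = \prod_(p <- primes m) (p ^ logn p m * p.-1).
  by rewrite big_split /= -mE.
apply: eq_big_seq => p.
rewrite -logn_gt0 => lg.
by rewrite -mulnA -expnSr prednK // mulnC.
Qed.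

Lemma rad_gt0 m : 0 < Defs.rad m.
Proof. by rewrite /Defs.rad big_seq prodn_cond_gt0 // => p; rewrite mem_primes => /andP[/prime_gt0]. Qed.

Lemma dvd_rad m p : p \in primes m -> p %| Defs.rad m.
Proof. by move=> pm; rewrite /Defs.rad (big_rem p) //= dvdn_mulr. Qed.

Lemma odd_prime_gt2 p : prime p -> odd p -> 2 < p.
Proof.
move=> pp op; have := prime_gt1 pp; case: p pp op => [|[|[|p]]] //.
Qed.

Lemma prime_gt2_odd p : prime p -> 2 < p -> odd p.
Proof.
move=> pp p2; apply/negPn/negP => ev.
have : 2 %| p by rewrite dvdn2 ev.
by rewrite dvdn_prime2 // => /eqP p2e; move: p2; rewrite -p2e.
Qed.

Lemma even_pred p : odd p -> 2 %| p.-1.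
Proof. by case: p => // p; rewrite oddS dvdn2 /= => ->. Qed.

Lemma pow_m1_odd m k : 1 < m -> odd k -> (m.-1) ^ k = m.-1 %[mod m].
Proof.
move=> m1 ok.
have h2 : (m.-1) ^ 2 = 1 %[mod m].
  have -> : (m.-1) ^ 2 = (m - 2) * m + 1.
    rewrite expnS expn1; case: m m1 => [|[|m]] // _; rewrite /=; nia.
  by rewrite modnMDl.
have -> : k = 2 * k./2 + 1 by rewrite -{1}(odd_double_half k) ok; lia.
by rewrite expnD expn1 -modnMml pow_pow_mod // modnMml mul1n.
Qed.

Lemma carm_even m : 2 < m -> 2 %| carmichael m.
Proof.
move=> m2; rewrite dvdn2; apply/negP => ol.
have m1 : 1 < m by lia.
have cm : coprime m.-1 m by rewrite -{2}(prednK (ltnW m1)) coprimenS.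
have := carm_pow m1 cm; rewrite pow_m1_odd // !modn_small; lia.
Qed.

Lemma two_phi_dvd m : 0 < m -> 2 * m %| delta m * carmichael m * Defs.rad m ->
  2 * totient m %| delta m * carmichael m * totient (Defs.rad m).
Proof.
move=> m0 h.
rewrite -(dvdn_pmul2r (rad_gt0 m)) -mulnA rad_totient //.
rewrite mulnA -(mulnA _ (totient _)) (mulnC (totient _) (Defs.rad m)) mulnA.
by apply: dvdn_mul.
Qed.

Lemma part1 n m : odd n -> 1 < n -> 0 < m -> f_fun m = n ->
  (d_fun m = 2 * n \/ d_fun m = 4 * n) -> False.
Proof.
move=> on n1 m0 hf hd.
set l := pdiv n.
have pl : prime l by apply: pdiv_prime.
have ln : l %| n by apply: pdiv_dvd.
have ol : odd l.
  apply/negPn/negP => el.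
  have : 2 %| l by rewrite dvdn2 el.
  rewrite dvdn_prime2 // => /eqP e2l.
  by move: ln; rewrite -e2l dvdn2 on.
have l2 : 2 < l by apply: odd_prime_gt2.
have ld : l %| d_fun m by case: hd => ->; apply: dvdn_mull.
have d2 : 2 %| d_fun m by case: hd => ->; [apply: dvdn_mulr | apply: (@dvdn_trans 4); [|apply: dvdn_mulr]].
have dm : d_fun m %| m by apply: dvdn_gcdl.
have dphi : d_fun m %| delta m * totient (Defs.rad m) by apply: dvdn_gcdr.
have lm : l %| m := dvdn_trans ld dm.
have m2 : 2 %| m := dvdn_trans d2 dm.
have lphi : l %| totient (Defs.rad m).
  have : l %| 2 * totient (Defs.rad m).
    apply: (dvdn_trans (dvdn_trans ld dphi)); apply: dvdn_mul => //.
    by rewrite /delta; case: ifP.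
  rewrite Gauss_dvdr // prime_coprime // dvdn_prime2 //; apply/eqP => l2'.
  by move: ol; rewrite l2'.
have lpm : l \in primes m by rewrite mem_primes pl m0.
move: (lphi); rewrite totient_rad Euclid_dvd_prod // big_has => /hasP [x xpm lx].
have px : prime x by move: xpm; rewrite mem_primes => /andP[].
have x1 : 0 < x.-1 by move: (prime_gt1 px); clear -x; lia.
have lxle := dvdn_leq x1 lx.
have xl : x != l by apply/eqP => e; move: lxle l2; rewrite e; clear; lia.
have ox : odd x by apply: prime_gt2_odd => //; move: lxle l2; clear -x; lia.
have four : 4 %| totient (Defs.rad m).
  rewrite totient_rad (big_rem l) //= (big_rem x) /=; last by rewrite mem_rem_uniq ?primes_uniq // inE xl.
  rewrite mulnA (_ : 4 = 2 * 2) // dvdn_mulr //.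
  by apply: dvdn_mul; apply: even_pred.
have m3 : 2 < m by move: (dvdn_leq m0 lm) l2; clear -m; lia.
case: (boolP (8 %| m)) => m8.
  have dl : delta m = 2 by rewrite /delta (dvdn_trans _ m8).
  have : 8 %| d_fun m.
    rewrite /d_fun dvdn_gcd m8 dl /= (_ : 8 = 2 * 4) //.
    by rewrite dvdn_pmul2l.
  case: hd => ->.
    rewrite (_ : 8 = 2 * 4) // dvdn_pmul2l // => h4; have := dvdn_trans (isT : 2 %| 4) h4.
    by rewrite dvdn2 on.
  rewrite (_ : 8 = 4 * 2) // dvdn_pmul2l //.
  by rewrite dvdn2 on.
set a := logn 2 m.
have a1 : 1 <= a by rewrite -(pfactor_dvdn 1 (isT : prime 2) m0) expn1.
have a2 : a <= 2 by rewrite leqNgt -(pfactor_dvdn 3 (isT : prime 2) m0).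
have hl := carm_even m3.
have hr : 2 %| Defs.rad m by apply: dvd_rad; rewrite mem_primes m0 m2.
have h2m : 2 * m %| delta m * carmichael m * Defs.rad m.
  apply/dvdn_partP; first by rewrite muln_gt0 m0.
  move=> p; rewrite mem_primes => /and3P[pp _ pdv].
  rewrite p_part lognM // logn_prime //.
  case: (eqVneq p 2) => [-> | p2] /=.
    rewrite -/a /delta.
    case: (eqVneq a 1) => [ea | a1'].
      have -> : (4 %| m) = false.
        by apply/negbTE; rewrite (pfactor_dvdn 2 (isT : prime 2) m0) -/a ea.
      rewrite ea.
      by rewrite mul1n (_ : 2 ^ 2 = 2 * 2) // dvdn_mul.
    have -> : a = 2 by move: a1 a2 a1'; clear; lia.
    have -> : (4 %| m) by rewrite (pfactor_dvdn 2 (isT : prime 2) m0) -/a; move: a1 a2 a1'; clear; lia.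
    by rewrite (_ : 2 ^ (1 + 2) = 2 * 2 * 2) // dvdn_mul // dvdn_mul.
  rewrite add0n.
  have pm : p %| m.
    by move: pdv; rewrite Gauss_dvdr // prime_coprime // dvdn_prime2 // eq_sym (negbTE p2).
  have pg2 : 2 < p by move: (prime_gt1 pp) p2; clear; lia.
  have e1 : 0 < logn p m by rewrite logn_gt0 mem_primes pp m0.
  rewrite -mulnA dvdn_mull // -(prednK e1) expnSr dvdn_mul //.
    exact: carm_ppow.
  by apply: dvd_rad; rewrite mem_primes pp m0.
have hQ := two_phi_dvd m0 h2m.
move: on; rewrite -hf /f_fun -(divnK hQ) mulnA mulnK ?totient_gt0 //.
have : 2 %| gcdn m (delta m * carmichael m * totient (Defs.rad m) %/ (2 * totient m) * 2).
  by rewrite dvdn_gcd m2 dvdn_mull.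
by rewrite dvdn2 => /negbTE ->.
Qed.


Lemma dvd3 y p q r : prime y -> prime p -> prime q -> prime r ->
  y %| p * p * q * r -> [|| y == p, y == q | y == r].
Proof.
move=> py pp pq pr; rewrite !Euclid_dvdM // !dvdn_prime2 //.
by case: (y == p); case: (y == q); case: (y == r).
Qed.

Lemma coprime_primes p q : prime p -> prime q -> coprime p q = (p != q).
Proof. by move=> pp pq; rewrite prime_coprime // dvdn_prime2. Qed.

Lemma part2 p q r : prime p -> prime q -> prime r -> odd p -> p < q ->
  p %| q - 1 -> ~~ (p * p %| q - 1) -> r %% q = 1 -> r %% p = 2 ->
  f_fun (p * p * q * r) = q /\ d_fun (p * p * q * r) = p * q.
Proof.
move=> pp pq pr op pltq pdq npp rq rp.
have p2 : 2 < p by apply: odd_prime_gt2.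
have q1 : 1 < q := prime_gt1 pq.
have rgtq : q < r.
  have r1 := prime_gt1 pr.
  rewrite ltnNge; apply/negP => rle.
  have : r < q by rewrite ltn_neqAle rle andbT; apply/eqP => e; move: rq; rewrite e modnn.
  by move/modn_small; rewrite rq => e1; move: r1; rewrite -e1.
have rp1 : ~~ (p %| r.-1).
  rewrite /dvdn; move: rp; rewrite -{1}(prednK (prime_gt0 pr)) -addn1 -modnDml => h.
  apply/negP => /eqP h0; move: h; rewrite h0 add0n modn_small //; move: p2; clear; lia.
have pq' : p != q by rewrite neq_ltn pltq.
have qr : q != r by rewrite neq_ltn rgtq.
have prr : p != r by rewrite neq_ltn (ltn_trans pltq rgtq).
set m := p * p * q * r.
have m0 : 0 < m by rewrite /m !muln_gt0 !prime_gt0.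
have oq : odd q by apply: prime_gt2_odd => //; move: p2 pltq; clear; lia.
have or : odd r by apply: prime_gt2_odd => //; move: p2 pltq rgtq; clear; lia.
have dm : delta m = 1.
  rewrite /delta; case: ifP => // h4.
  have : 2 %| m := dvdn_trans (isT : 2 %| 4) h4.
  by rewrite dvdn2 /m !oddM op oq or.
have pm : perm_eq (primes m) [:: p; q; r].
  apply: uniq_perm; first exact: primes_uniq.
    by rewrite /= !inE negb_or pq' prr qr.
  move=> y; rewrite mem_primes !inE m0 /=; apply/andP/idP.
    by case=> py yd; apply: dvd3.
  case/or3P => /eqP ->; split => //; rewrite /m.
  - by rewrite -!mulnA dvdn_mulr.
  - by rewrite dvdn_mulr // dvdn_mull.
  - by rewrite dvdn_mull.
set T := p.-1 * q.-1 * r.-1.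
have phirad : totient (Defs.rad m) = T.
  by rewrite totient_rad (perm_big _ pm) /= !big_cons big_nil muln1 mulnA.
have phim : totient m = p * T.
  have cpq : coprime p q by rewrite coprime_primes.
  have cpr : coprime p r by rewrite coprime_primes.
  have cqr : coprime q r by rewrite coprime_primes.
  rewrite /m totient_coprime; last by rewrite !coprimeMl cpr cqr.
  rewrite totient_coprime; last by rewrite !coprimeMl cpq.
  rewrite mulnn (totient_pfactor pp) //.
  rewrite (totient_prime pq) (totient_prime pr) /T expn1.
  by rewrite (mulnC p.-1) -!mulnA.
have pm' : p %| m by rewrite /m -!mulnA dvdn_mulr.
have m1 : 1 < m by have := dvdn_leq m0 pm'; move: p2; clear; lia.
have pq1 : p %| q.-1 by rewrite -subn1.
have qr1 : q %| r.-1.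
  by rewrite {1}(divn_eq r q) rq addn1 /= dvdn_mull.
have cpq : coprime p q by rewrite coprime_primes.
have cpr : coprime p r by rewrite coprime_primes.
have cqr : coprime q r by rewrite coprime_primes.
set l := carmichael m.
have hlT : l %| T.
  apply: carm_dvd => // x cx.
  have cx' : coprime x (p * p * q * r) by [].
  move: cx'; rewrite !coprimeMr => /andP[/andP[/andP[cxp _] cxq] cxr].
  apply/eqP; rewrite /m (chinese_remainder (_ : coprime (p * p * q) r)); last by rewrite !coprimeMl cpr cqr.
  rewrite (chinese_remainder (_ : coprime (p * p) q)); last by rewrite !coprimeMl cpq.
  apply/andP; split; [apply/andP; split; apply/eqP | apply/eqP].
  - have -> : T = totient (p * p) * (q.-1 %/ p * r.-1).
      rewrite mulnn (totient_pfactor pp) // /T -{1}(divnK pq1) /=; ring.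
    by apply: pow_pow_mod; apply: Euler_exp_totient; rewrite coprimeMr cxp.
  - have -> : T = totient q * (p.-1 * r.-1) by rewrite (totient_prime pq) /T; ring.
    by apply: pow_pow_mod; apply: Euler_exp_totient.
  - have -> : T = totient r * (p.-1 * q.-1) by rewrite (totient_prime pr) /T; ring.
    by apply: pow_pow_mod; apply: Euler_exp_totient.
have pl : p %| l by apply: carm_prime => //; rewrite phim dvdn_mulr.
have ql : q %| l by apply: carm_prime => //; rewrite phim dvdn_mull // /T dvdn_mull.
have p10 : 0 < p.-1 by move: p2; clear; lia.
have q10 : 0 < q.-1 by move: p2 pltq; clear; lia.
have r10 : 0 < r.-1 by move: p2 pltq rgtq; clear; lia.
have nppT : ~~ (p * p %| T).
  have -> : T = (p.-1 * r.-1) * q.-1 by rewrite /T; ring.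
  rewrite Gauss_dvdr; first by rewrite -subn1.
  have cpp1 : coprime p p.-1.
    rewrite prime_coprime //; apply/negP => /(dvdn_leq p10); move: p2; clear; lia.
  by rewrite !coprimeMl !coprimeMr cpp1 prime_coprime // rp1.
have lE : l = l %/ p * p by rewrite divnK.
set l' := l %/ p in lE.
have cl'p : coprime l' p.
  rewrite coprime_sym prime_coprime //; apply/negP => pl'.
  move: nppT; rewrite (dvdn_trans _ hlT) // lE dvdn_mul //.
have rnT : ~~ (r %| T).
  rewrite /T !Euclid_dvdM //; apply/negP => /orP [/orP [] |] /(dvdn_leq _) h.
  - by move: (h p10) p2 pltq rgtq; clear; lia.
  - by move: (h q10) p2 pltq rgtq; clear; lia.
  - by move: (h r10) p2 pltq rgtq; clear; lia.
have cl'r : coprime l' r.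
  rewrite coprime_sym prime_coprime //; apply/negP => rl'.
  by move: rnT; rewrite (dvdn_trans _ hlT) // lE dvdn_mulr.
have ql' : q %| l' by move: ql; rewrite lE Gauss_dvdl // coprime_primes // eq_sym.
split.
  rewrite /f_fun dm phirad phim -/l lE mul1n -mulnA mulnK; last by rewrite muln_gt0 prime_gt0 //= /T !muln_gt0 p10 q10.
  rewrite (_ : m = q * (p * p * r)); last by rewrite /m; ring.
  rewrite gcdnC Gauss_gcdl; first by apply/gcdn_idPr.
  by rewrite !coprimeMr cl'p cl'r.
have pqT : p * q %| T.
  rewrite Gauss_dvd // /T; apply/andP; split; [apply: dvdn_mulr; apply: dvdn_mull | apply: dvdn_mull] => //.
rewrite /d_fun dm mul1n phirad -(divnK pqT).
set T' := T %/ (p * q).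
rewrite (_ : m = (p * q) * (p * r)); last by rewrite /m; ring.
rewrite (mulnC T') -muln_gcdr.
suff cp : coprime (p * r) T' by rewrite (eqP cp) muln1.
rewrite coprimeMl; apply/andP; split.
  rewrite prime_coprime //; apply/negP => pT'.
  move: nppT; rewrite -(divnK pqT) -/T' mulnA => /negP; apply; apply: dvdn_mulr; exact: dvdn_mul.
rewrite prime_coprime //; apply/negP => rT'.
by move: rnT; rewrite -(divnK pqT) -/T' dvdn_mulr.
Qed.

Lemma INR_muln a b : INR (a * b) = (INR a * INR b)%R.
Proof. exact: mult_INR. Qed.

Theorem theorem1p4 :
  (forall n : nat, odd n -> 1 < n ->
     (forall m : nat, 0 < m -> ~ (f_fun m = n /\ d_fun m = 2 * n)) /\
     (forall m : nat, 0 < m -> ~ (f_fun m = n /\ d_fun m = 4 * n)))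
  /\
  (forall L : R, linnik_constant L ->
     exists C : R, (0 < C)%R /\
       forall p q : nat, prime p -> prime q -> odd p -> odd q -> p < q ->
         p %| q - 1 -> ~~ (p * p %| q - 1) ->
         exists m : nat, 0 < m /\
           (INR m <= C * INR p * Rpower (INR (p * q)) (L + 1))%R /\
           f_fun m = q /\ d_fun m = p * q).
Proof.
split.
  move=> n on n1; split => m m0 [hf hd]; apply: (part1 on n1 m0 hf); [left|right] => //.
move=> L [L0 [c [c0 Hc]]]; exists c; split => // p q pp pq op oq pltq pdq npp.
have p2 : 2 < p := odd_prime_gt2 pp op.
have cpq : coprime p q by rewrite coprime_primes // neq_ltn pltq.
have pq0 : 0 < p * q by rewrite muln_gt0 !prime_gt0.
set a := chinese p q 2 1 %% (p * q).
have ap : a %% p = 2.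
  by rewrite /a (modn_dvdm _ (dvdn_mulr q (dvdnn p))) chinese_modl // modn_small.
have aq : a %% q = 1.
  by rewrite /a (modn_dvdm _ (dvdn_mull p (dvdnn q))) chinese_modr // modn_small // prime_gt1.
have a1 : 1 <= a by rewrite lt0n; apply/negP => /eqP a0; move: ap; rewrite a0 mod0n.
have alt : a < p * q by rewrite ltn_pmod.
have ca : coprime a (p * q).
  rewrite coprimeMr -(coprime_modl a p) ap -(coprime_modl a q) aq coprime1n andbT.
  by rewrite prime_coprime // dvdn2 op.
have [j [prj hj]] := Hc a (p * q) a1 alt ca.
set r := a + j * (p * q) in prj hj.
have rq : r %% q = 1 by rewrite /r mulnA addnC modnMDl aq.
have rp : r %% p = 2 by rewrite /r (mulnC p) mulnA addnC modnMDl ap.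
have [hf hd] := part2 pp pq prj op pltq pdq npp rq rp.
exists (p * p * q * r); split; first by rewrite !muln_gt0 !prime_gt0.
split; last by [].
have pqR : (0 < INR (p * q))%R by apply: lt_0_INR; apply/ltP.
rewrite Rpower_plus Rpower_1 //.
have -> : INR (p * p * q * r) = (INR p * INR (p * q) * INR r)%R.
  by rewrite !INR_muln !Rmult_assoc.
have hp : (0 <= INR p)%R := pos_INR p.
have := Rmult_le_compat_l (INR p * INR (p * q)) _ _ (Rmult_le_pos _ _ hp (Rlt_le _ _ pqR)) hj.
nra.
Qed.
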